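(* Fix $\gamma\in(0,1)$. For $n\ge1$ define $\rho_n\colon\mathbb{R}\to\{-1,0,1\}$ by $\rho_n(x)=0$ if $x\in[j4^{-n},(j+1)4^{-n})$ with $j\equiv0,3\pmod 4$, $\rho_n(x)=1$ if $j\equiv1\pmod4$, and $\rho_n(x)=-1$ if $j\equiv2\pmod4$ ($j\in\mathbb{Z}$). Let $v_n(x)=\prod_{k=1}^n(1+\gamma\rho_{2k-1}(x))$ and $v_m^*(x)=\max(v_1(x),\dots,v_m(x))$. Then there exists a constant $c>0$ (depending on $\gamma$) such that \[\int_0^1 v_m^*(x)\,dx\ge cm\qquad\text{for all }m=1,2,\dots\] *)

(* Defs.v *)
From Stdlib Require Import Reals ZArith.
Open Scope R_scope.

(* floor x : the unique integer j with j <= x < j + 1 (via Stdlib's [up]). *)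
Definition Zfloor (x : R) : Z := (up x - 1)%Z.

Definition rho (n : nat) (x : R) : R :=
  match Z.modulo (Zfloor (x * 4 ^ n)) 4 with
  | 1%Z => 1
  | 2%Z => -1
  | _ => 0
  end.

Fixpoint v (gamma : R) (n : nat) (x : R) : R :=
  match n with
  | O => 1
  | S k => v gamma k x * (1 + gamma * rho (2 * S k - 1) x)
  end.

(* v*_m(x) = max(v_1(x), ..., v_m(x)) for m >= 1 (value at m = 0 is unused). *)
Fixpoint vstar (gamma : R) (m : nat) (x : R) : R :=
  match m with
  | O => 0
  | S O => v gamma 1 x
  | S k => Rmax (vstar gamma k x) (v gamma m x)
  end.

(* Main.v *)
Require Import Defs.
From Stdlib Require Import Reals ZArith Lra Lia Psatz.
From Coquelicot Require Import Coquelicot.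
Open Scope R_scope.

Lemma Zfloor_bounds x : IZR (Zfloor x) <= x < IZR (Zfloor x) + 1.
Proof. unfold Zfloor. rewrite minus_IZR. destruct (archimed x). simpl. lra. Qed.

Lemma Zfloor_spec x z : IZR z <= x < IZR z + 1 -> Zfloor x = z.
Proof.
  intros [H1 H2]. unfold Zfloor.
  rewrite <- (tech_up x (z+1)); [ring| rewrite plus_IZR; simpl; lra | rewrite plus_IZR; simpl; lra].
Qed.

Lemma Zfloor_add x k : Zfloor (x + IZR k) = (Zfloor x + k)%Z.
Proof.
  apply Zfloor_spec. rewrite plus_IZR. destruct (Zfloor_bounds x). lra.
Qed.

Definition rval (z : Z) : R := match Z.modulo z 4 with 1%Z => 1 | 2%Z => -1 | _ => 0 end.

Lemma rho_rval n x : rho n x = rval (Zfloor (x * 4 ^ n)).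
Proof. reflexivity. Qed.

Lemma rval_range z : rval z = 1 \/ rval z = -1 \/ rval z = 0.
Proof.
  unfold rval. destruct (z mod 4)%Z as [|p|p]; auto.
  destruct p as [p|p|]; auto. destruct p; auto.
Qed.

Lemma rval_shift z q n : rval (z + - q * 4 ^ Z.of_nat (S n)) = rval z.
Proof.
  unfold rval. rewrite Nat2Z.inj_succ, Z.pow_succ_r by lia.
  replace (- q * (4 * 4 ^ Z.of_nat n))%Z with ((- q * 4 ^ Z.of_nat n) * 4)%Z by ring.
  rewrite Z.mod_add by lia. reflexivity.
Qed.

Lemma rho_shift n x q : (1 <= n)%nat -> rho (n + 2) x = rho n (16 * x - IZR q).
Proof.
  intros Hn. rewrite !rho_rval. destruct n as [|n]; [lia|].
  replace ((16 * x - IZR q) * 4 ^ S n) with (x * 4 ^ (S n + 2) + IZR (- q * 4 ^ Z.of_nat (S n))).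
  - rewrite Zfloor_add, rval_shift. reflexivity.
  - rewrite mult_IZR, <- pow_IZR, opp_IZR, pow_add. simpl. ring.
Qed.

Section G.
Variable gamma : R.
Hypothesis hg : 0 < gamma < 1.

Lemma v_shift k x q : v gamma (S k) x = (1 + gamma * rho 1 x) * v gamma k (16 * x - IZR q).
Proof.
  induction k.
  - simpl. ring.
  - change (v gamma (S (S k)) x) with (v gamma (S k) x * (1 + gamma * rho (2 * S (S k) - 1) x)).
    rewrite IHk.
    change (v gamma (S k) (16 * x - IZR q)) with
      (v gamma k (16 * x - IZR q) * (1 + gamma * rho (2 * S k - 1) (16 * x - IZR q))).
    replace (2 * S (S k) - 1)%nat with ((2 * S k - 1) + 2)%nat by lia.
    rewrite (rho_shift _ x q) by lia. ring.
Qed.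

Lemma fac_pos n x : 0 < 1 + gamma * rho n x.
Proof. rewrite rho_rval. destruct (rval_range (Zfloor (x * 4 ^ n))) as [H|[H|H]]; rewrite H; lra. Qed.

Lemma v_pos k x : 0 < v gamma k x.
Proof. induction k; simpl. lra. apply Rmult_lt_0_compat; auto. apply fac_pos. Qed.

Lemma vstar_nonneg m x : 0 <= vstar gamma m x.
Proof.
  induction m. simpl; lra. destruct m. simpl. left. apply (v_pos 1).
  change (vstar gamma (S (S m)) x) with (Rmax (vstar gamma (S m) x) (v gamma (S (S m)) x)).
  eapply Rle_trans; [apply IHm| apply Rmax_l].
Qed.

Lemma vstar_shift m x q :
  vstar gamma (S m) x = (1 + gamma * rho 1 x) * Rmax 1 (vstar gamma m (16 * x - IZR q)).
Proof.
  induction m.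
  - simpl. rewrite Rmax_left by lra. ring.
  - change (vstar gamma (S (S m)) x) with (Rmax (vstar gamma (S m) x) (v gamma (S (S m)) x)).
    rewrite IHm, (v_shift _ x q).
    rewrite RmaxRmult by (left; apply fac_pos).
    f_equal. destruct m.
    + simpl vstar at 1. rewrite (Rmax_left 1 0) by lra. reflexivity.
    + change (vstar gamma (S (S m)) (16 * x - IZR q)) with
        (Rmax (vstar gamma (S m) (16 * x - IZR q)) (v gamma (S (S m)) (16 * x - IZR q))).
      rewrite Rmax_assoc. reflexivity.
Qed.


Definition cc (d : nat) : R := 1 + gamma * rval (Z.of_nat d).

Lemma cc_pos d : 0 < cc d.
Proof. unfold cc. destruct (rval_range (Z.of_nat d)) as [H|[H|H]]; rewrite H; lra. Qed.

Lemma rho1_piece d r x : (r < 4)%nat ->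
  INR (4 * d + r) / 16 < x < INR (S (4 * d + r)) / 16 -> rho 1 x = rval (Z.of_nat d).
Proof.
  intros Hr Hx. rewrite rho_rval. f_equal. apply Zfloor_spec.
  rewrite <- INR_IZR_INZ. rewrite S_INR, plus_INR, mult_INR in Hx.
  assert (INR r <= 3) by (replace 3 with (INR 3) by (simpl; ring); apply le_INR; lia).
  assert (0 <= INR r) by apply pos_INR. simpl in *. lra.
Qed.

Lemma Rmax_scale c t V : 0 < c ->
  Rmax t (c * Rmax 1 V) = c * Rmax (Rmax (t / c) 1) V.
Proof.
  intros Hc. rewrite <- !RmaxRmult by lra.
  replace (c * (t / c)) with t by (field; lra). rewrite Rmult_1_r. apply Rmax_assoc.
Qed.

Lemma piece m t d r : (r < 4)%nat -> 0 <= t ->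
  (forall s, 1 <= s -> ex_RInt (fun y => Rmax s (vstar gamma m y)) 0 1) ->
  ex_RInt (fun x => Rmax t (vstar gamma (S m) x)) (INR (4*d+r) / 16) (INR (S (4*d+r)) / 16) /\
  RInt (fun x => Rmax t (vstar gamma (S m) x)) (INR (4*d+r) / 16) (INR (S (4*d+r)) / 16)
  = cc d / 16 * RInt (fun y => Rmax (Rmax (t / cc d) 1) (vstar gamma m y)) 0 1.
Proof.
  intros Hr Ht IH.
  set (p := (4 * d + r)%nat).
  set (s := Rmax (t / cc d) 1).
  set (G := fun y => Rmax s (vstar gamma m y)).
  assert (HG : ex_RInt G 0 1) by (apply IH; apply Rmax_r).
  assert (Hab : INR p / 16 <= INR (S p) / 16) by (rewrite S_INR; lra).
  assert (Hb0 : 16 * (INR p / 16) + - INR p = 0) by field.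
  assert (Hb1 : 16 * (INR (S p) / 16) + - INR p = 1) by (rewrite S_INR; field).
  
  assert (Heq : forall x, Rmin (INR p / 16) (INR (S p) / 16) < x < Rmax (INR p / 16) (INR (S p) / 16) ->
     scal (cc d / 16) (scal 16 (G (16 * x + - INR p))) = Rmax t (vstar gamma (S m) x)).
  { intros x Hx. rewrite Rmin_left, Rmax_right in Hx by exact Hab.
    rewrite (vstar_shift m x (Z.of_nat p)), (rho1_piece d r x Hr Hx).
    rewrite <- INR_IZR_INZ. fold (cc d). rewrite Rmax_scale by apply cc_pos.
    unfold G, s, scal; simpl; unfold mult; simpl.
    replace (16 * x + - INR p) with (16 * x - INR p) by ring.
    
    set (W := Rmax (Rmax (t / cc d) 1) (vstar gamma m (16 * x - INR p))).
    clearbody W. set (c := cc d). clearbody c. clear -c W. field. }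
  assert (HC : ex_RInt (fun y => scal 16 (G (16 * y + - INR p))) (INR p / 16) (INR (S p) / 16)).
  { apply (ex_RInt_comp_lin G 16 (- INR p)). rewrite Hb0, Hb1. exact HG. }
  set (F1 := fun y => scal 16 (G (16 * y + - INR p))).
  set (F := fun y => scal (cc d / 16) (F1 y)).
  set (f := fun x => Rmax t (vstar gamma (S m) x)).
  split.
  - apply (ex_RInt_ext F f _ _ Heq). apply (ex_RInt_scal F1 _ _ (cc d / 16) HC).
  - rewrite <- (RInt_ext F f _ _ Heq).
    transitivity (scal (cc d / 16) (RInt F1 (INR p / 16) (INR (S p) / 16))).
    { apply (RInt_scal F1 _ _ (cc d / 16) HC). }
    
    transitivity (scal (cc d / 16) (RInt G (16 * (INR p / 16) + - INR p) (16 * (INR (S p) / 16) + - INR p))).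
    { f_equal. apply (RInt_comp_lin G 16 (- INR p)). rewrite Hb0, Hb1; exact HG. }
    rewrite Hb0, Hb1.
    
    unfold scal; simpl; unfold mult; simpl. reflexivity.
Qed.

Fixpoint sR (n : nat) (g : nat -> R) : R :=
  match n with O => 0 | S k => sR k g + g k end.

Lemma sR_ext n g h : (forall p, (p < n)%nat -> g p = h p) -> sR n g = sR n h.
Proof.
  induction n; intros H; simpl. reflexivity.
  rewrite IHn by (intros; apply H; lia). rewrite H by lia. reflexivity.
Qed.

Lemma chasles_sum (f : R -> R) n :
  (forall p, (p < n)%nat -> ex_RInt f (INR p / 16) (INR (S p) / 16)) ->
  ex_RInt f 0 (INR n / 16) /\
  RInt f 0 (INR n / 16) = sR n (fun p => RInt f (INR p / 16) (INR (S p) / 16)).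
Proof.
  induction n; intros H.
  - simpl. replace (0 / 16) with 0 by field. split.
    + apply (ex_RInt_point f 0).
    + rewrite (RInt_point 0 f). reflexivity.
  - destruct IHn as [E1 E2]; [intros; apply H; lia|].
    assert (E3 := H n (Nat.lt_succ_diag_r n)).
    split.
    + apply (ex_RInt_Chasles f _ _ _ E1 E3).
    + rewrite <- (RInt_Chasles f _ _ _ E1 E3). simpl sR. rewrite E2. reflexivity.
Qed.

Definition K m t c := RInt (fun y => Rmax (Rmax (t / c) 1) (vstar gamma m y)) 0 1.

Lemma sR16 (g : nat -> R) : sR 16 g = 0 + g 0%nat + g 1%nat + g 2%nat + g 3%nat + g 4%nat
  + g 5%nat + g 6%nat + g 7%nat + g 8%nat + g 9%nat + g 10%nat + g 11%nat + g 12%nat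
  + g 13%nat + g 14%nat + g 15%nat.
Proof. reflexivity. Qed.

Lemma cc0 : cc 0 = 1. Proof. unfold cc, rval. simpl. ring. Qed.
Lemma cc1 : cc 1 = 1 + gamma. Proof. unfold cc, rval. simpl. ring. Qed.
Lemma cc2 : cc 2 = 1 - gamma. Proof. unfold cc, rval. simpl. ring. Qed.
Lemma cc3 : cc 3 = 1. Proof. unfold cc, rval. simpl. ring. Qed.

Lemma recur m t : 0 <= t ->
  (forall s, 1 <= s -> ex_RInt (fun y => Rmax s (vstar gamma m y)) 0 1) ->
  ex_RInt (fun x => Rmax t (vstar gamma (S m) x)) 0 1 /\
  RInt (fun x => Rmax t (vstar gamma (S m) x)) 0 1 =
  / 4 * (K m t 1 + (1 + gamma) * K m t (1 + gamma) + (1 - gamma) * K m t (1 - gamma) + K m t 1).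
Proof.
  intros Ht IH.
  set (f := fun x => Rmax t (vstar gamma (S m) x)).
  assert (HP : forall p, (p < 16)%nat ->
    ex_RInt f (INR p / 16) (INR (S p) / 16) /\
    RInt f (INR p / 16) (INR (S p) / 16) = cc (p / 4) / 16 * K m t (cc (p / 4))).
  { intros p Hp.
    pose proof (piece m t (p / 4) (p mod 4) (Nat.mod_upper_bound p 4 ltac:(lia)) Ht IH) as H.
    rewrite <- (Nat.div_mod_eq p 4) in H. exact H. }
  destruct (chasles_sum f 16) as [E ES]; [intros p Hp; apply (HP p Hp)|].
  assert (H16 : INR 16 / 16 = 1) by (rewrite INR_IZR_INZ; simpl; field).
  rewrite H16 in E, ES.
  split; [exact E|].
  rewrite ES.
  rewrite (sR_ext 16 _ (fun p => cc (p / 4) / 16 * K m t (cc (p / 4)))) by (intros p Hp; apply (HP p Hp)).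
  rewrite sR16. cbv beta.
  repeat match goal with |- context[(?a / 4)%nat] =>
    let w := eval compute in (a / 4)%nat in change (a / 4)%nat with w end.
  rewrite cc0, cc1, cc2, cc3. lra.
Qed.

End G.


Lemma ln_lb u : 0 < u -> 1 - / u <= ln u.
Proof.
  intros Hu. assert (H := exp_ineq1_le (ln (/ u))). rewrite exp_ln in H by (apply Rinv_0_lt_compat; lra).
  rewrite ln_Rinv in H by lra. lra.
Qed.

Lemma ln_lb_strict u : 0 < u -> u <> 1 -> 1 - / u < ln u.
Proof.
  intros Hu H1. assert (Hn : ln (/ u) <> 0).
  { intro H0. apply H1.
    assert (Hi : / u = 1) by (rewrite <- (exp_ln (/ u)) by (apply Rinv_0_lt_compat; lra); rewrite H0; apply exp_0).
    assert (Hu2 : u = / (/ u)) by (field; lra). rewrite Hu2, Hi. apply Rinv_1. }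
  assert (H := exp_ineq1 (ln (/ u)) Hn). rewrite exp_ln in H by (apply Rinv_0_lt_compat; lra).
  rewrite ln_Rinv in H by lra. lra.
Qed.

Definition alpha gamma := (gamma + (1 - gamma) * ln (1 - gamma)) / 4.

Lemma alpha_pos gamma : 0 < gamma < 1 -> 0 < alpha gamma.
Proof.
  intros hg. unfold alpha. assert (H := ln_lb_strict (1 - gamma) ltac:(lra) ltac:(lra)).
  assert (H2 : (1 - gamma) * (1 - / (1 - gamma)) < (1 - gamma) * ln (1 - gamma))
    by (apply Rmult_lt_compat_l; lra).
  replace ((1 - gamma) * (1 - / (1 - gamma))) with (- gamma) in H2 by (field; lra). lra.
Qed.

Lemma ln_div s c : 0 < s -> 0 < c -> ln (s / c) = ln s - ln c.
Proof. intros. unfold Rdiv. rewrite ln_mult, ln_Rinv; try apply Rinv_0_lt_compat; lra. Qed.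

Lemma main_ind gamma (hg : 0 < gamma < 1) m : forall s, 1 <= s ->
  ex_RInt (fun y => Rmax s (vstar gamma m y)) 0 1 /\
  RInt (fun y => Rmax s (vstar gamma m y)) 0 1 >= s + alpha gamma * INR m - ln s.
Proof.
  assert (Hlns : forall s, 1 <= s -> 0 <= ln s).
  { intros s Hs. destruct (Req_dec s 1) as [->|Hne]. rewrite ln_1; lra.
    left. rewrite <- ln_1. apply ln_increasing; lra. }
  induction m as [|m IHm]; intros s Hs.
  - assert (Heq : forall x, Rmin 0 1 < x < Rmax 0 1 -> (fun _ => s) x = Rmax s (vstar gamma 0 x)).
    { intros x _. simpl. rewrite Rmax_left; lra. }
    split.
    + apply (ex_RInt_ext (fun _ => s) _ 0 1 Heq). apply ex_RInt_const.
    + rewrite <- (RInt_ext (fun _ => s) _ 0 1 Heq). rewrite RInt_const.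
      unfold scal; simpl; unfold mult; simpl. simpl INR. specialize (Hlns s Hs). lra.
  - assert (IH' : forall s, 1 <= s -> ex_RInt (fun y => Rmax s (vstar gamma m y)) 0 1)
      by (intros; apply IHm; auto).
    destruct (recur gamma hg m s ltac:(lra) IH') as [E Eq]. split; [exact E|]. rewrite Eq.
    assert (KB : forall c, 0 < c -> K gamma m s c >= Rmax (s / c) 1 + alpha gamma * INR m - ln (Rmax (s / c) 1)).
    { intros c Hc. apply IHm. apply Rmax_r. }
    assert (K1 := KB 1 ltac:(lra)). assert (K2 := KB (1 + gamma) ltac:(lra)).
    assert (K3 := KB (1 - gamma) ltac:(lra)).
    replace (s / 1) with s in K1 by field. rewrite Rmax_left in K1 by lra.
    assert (Hs3 : 1 <= s / (1 - gamma)).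
    { apply (Rmult_le_reg_r (1 - gamma)); [lra|]. unfold Rdiv. rewrite Rmult_assoc, Rinv_l by lra. lra. }
    rewrite Rmax_left in K3 by lra. rewrite ln_div in K3 by lra.
    assert (M3 : (1 - gamma) * K gamma m s (1 - gamma) >= (1 - gamma) * (s / (1 - gamma) + alpha gamma * INR m - (ln s - ln (1 - gamma))))
      by (apply Rle_ge, Rmult_le_compat_l; lra).
    replace ((1 - gamma) * (s / (1 - gamma) + alpha gamma * INR m - (ln s - ln (1 - gamma))))
      with (s + (1 - gamma) * (alpha gamma * INR m - (ln s - ln (1 - gamma)))) in M3 by (field; lra).
    rewrite S_INR. unfold alpha in *.
    destruct (Rle_lt_dec (1 + gamma) s) as [Hb|Hb].
    + assert (Hs2 : 1 <= s / (1 + gamma)).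
      { apply (Rmult_le_reg_r (1 + gamma)); [lra|]. unfold Rdiv. rewrite Rmult_assoc, Rinv_l by lra. lra. }
      rewrite Rmax_left in K2 by lra. rewrite ln_div in K2 by lra.
      assert (M2 : (1 + gamma) * K gamma m s (1 + gamma) >= (1 + gamma) * (s / (1 + gamma) + (gamma + (1 - gamma) * ln (1 - gamma)) / 4 * INR m - (ln s - ln (1 + gamma))))
        by (apply Rle_ge, Rmult_le_compat_l; lra).
      replace ((1 + gamma) * (s / (1 + gamma) + (gamma + (1 - gamma) * ln (1 - gamma)) / 4 * INR m - (ln s - ln (1 + gamma))))
        with (s + (1 + gamma) * ((gamma + (1 - gamma) * ln (1 - gamma)) / 4 * INR m - (ln s - ln (1 + gamma)))) in M2 by (field; lra).
      assert (L := ln_lb (1 + gamma) ltac:(lra)).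
      assert (L2 : (1 + gamma) * (1 - / (1 + gamma)) <= (1 + gamma) * ln (1 + gamma)) by (apply Rmult_le_compat_l; lra).
      replace ((1 + gamma) * (1 - / (1 + gamma))) with gamma in L2 by (field; lra).
      lra.
    + rewrite Rmax_right in K2.
      2: { left. apply (Rmult_lt_reg_r (1 + gamma)); [lra|]. unfold Rdiv. rewrite Rmult_assoc, Rinv_l by lra. lra. }
      rewrite ln_1 in K2.
      assert (M2 : (1 + gamma) * K gamma m s (1 + gamma) >= (1 + gamma) * (1 + (gamma + (1 - gamma) * ln (1 - gamma)) / 4 * INR m - 0))
        by (apply Rle_ge, Rmult_le_compat_l; lra).
      assert (L := ln_lb s ltac:(lra)).
      assert (L2 : (1 + gamma) * (1 - / s) <= (1 + gamma) * ln s) by (apply Rmult_le_compat_l; lra).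
      assert (L3 : s - 1 <= (1 + gamma) * (1 - / s)).
      { replace ((1 + gamma) * (1 - / s)) with ((1 + gamma) * (s - 1) / s) by (field; lra).
        apply (Rmult_le_reg_r s); [lra|]. unfold Rdiv. rewrite Rmult_assoc, Rinv_l by lra. nra. }
      lra.
Qed.

Theorem lemma7p2 (gamma : R) (hg : 0 < gamma < 1) :
  exists c : R, 0 < c /\
    forall m : nat, (1 <= m)%nat ->
      exists pr : Riemann_integrable (vstar gamma m) 0 1,
        RiemannInt pr >= c * INR m.
Proof.
  assert (Ha := alpha_pos gamma hg).
  exists (Rmin 1 (alpha gamma)). split.
  { unfold Rmin. destruct (Rle_dec 1 (alpha gamma)); lra. }
  intros m Hm. destruct m as [|k]; [lia|].
  assert (IH' : forall s, 1 <= s -> ex_RInt (fun y => Rmax s (vstar gamma k y)) 0 1)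
    by (intros; apply main_ind; auto).
  destruct (recur gamma hg k 0 ltac:(lra) IH') as [E Eq].
  assert (Heq : forall x, Rmin 0 1 < x < Rmax 0 1 -> Rmax 0 (vstar gamma (S k) x) = vstar gamma (S k) x).
  { intros x _. apply Rmax_right. apply vstar_nonneg; auto. }
  assert (E' : ex_RInt (vstar gamma (S k)) 0 1) by (apply (ex_RInt_ext _ _ 0 1 Heq); exact E).
  exists (ex_RInt_Reals_0 _ _ _ E'). rewrite <- RInt_Reals.
  rewrite <- (RInt_ext _ _ 0 1 Heq). rewrite Eq.
  assert (H0 : forall c, Rmax (0 / c) 1 = 1).
  { intros c. unfold Rdiv. rewrite Rmult_0_l. apply Rmax_right. lra. }
  unfold K. rewrite !H0.
  destruct (main_ind gamma hg k 1 ltac:(lra)) as [_ B]. rewrite ln_1 in B.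
  rewrite S_INR.
  assert (c1 := Rmin_l 1 (alpha gamma)). assert (c2 := Rmin_r 1 (alpha gamma)).
  assert (Hk := pos_INR k).
  assert (Rmin 1 (alpha gamma) * INR k <= alpha gamma * INR k) by (apply Rmult_le_compat_r; lra).
  lra.
Qed.
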